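(* Let $1<p<\infty$, $\varepsilon>0$, and let $u$ be a smooth solution of $u_t=a_{ij}(\nabla u)u_{ij}$ in $Q_1$, where $a_{ij}(q)=\delta_{ij}+(p-2)\frac{q_iq_j}{|q|^2+\varepsilon^2}$. Let $\varphi:=(|\nabla u|^2+\varepsilon^2)^{p/2}$. Then $$\partial_t\varphi-a_{ij}(\nabla u)\partial_{ij}\varphi\le0\quad\text{in }Q_1.$$
   Context: $\nabla$ is the spatial gradient, $u_{ij}=\partial_{x_ix_j}u$, summation over repeated indices, $Q_1=B_1\times(-1,0]$ with $B_1$ the unit ball of $\mathbb{R}^n$. *)

(* Defs.v *)
From Stdlib Require Import Reals Lra Lia List.
Open Scope R_scope.

(* A point of R^n is represented by x : nat -> R with x k = 0 for k >= n. *)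
Definition pt := nat -> R.

Definition upd (x : pt) (i : nat) (r : R) : pt :=
  fun k => if Nat.eqb k i then r else x k.

Fixpoint sumR (n : nat) (f : nat -> R) : R :=
  match n with O => 0 | S m => sumR m f + f m end.

Definition sqnorm (n : nat) (x : pt) : R := sumR n (fun i => x i ^ 2).

Definition in_B1 (n : nat) (x : pt) : Prop :=
  (forall k, (n <= k)%nat -> x k = 0) /\ sqnorm n x < 1.

Definition in_Q1 (n : nat) (x : pt) (t : R) : Prop :=
  in_B1 n x /\ -1 < t <= 0.

Inductive dir := Sp (i : nat) | Tm.

Definition valid_dir (n : nat) (d : dir) : Prop :=
  match d with Sp i => (i < n)%nat | Tm => True end.

Definition mvx (d : dir) (x : pt) (h : R) : pt :=
  match d with Sp i => upd x i (x i + h) | Tm => x end.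
Definition mvt (d : dir) (t : R) (h : R) : R :=
  match d with Sp _ => t | Tm => t + h end.

(* g is the partial derivative of f in direction d at every point of Q_1,
   the difference quotient being taken within Q_1 (so at t = 0 the time
   derivative is the left derivative; spatial ones are two-sided). *)
Definition has_partial_Q1 (n : nat) (f g : pt -> R -> R) (d : dir) : Prop :=
  forall x t, in_Q1 n x t ->
  forall eps, 0 < eps -> exists delta, 0 < delta /\
    forall h, h <> 0 -> Rabs h < delta -> in_Q1 n (mvx d x h) (mvt d t h) ->
      Rabs ((f (mvx d x h) (mvt d t h) - f x t) / h - g x t) < eps.

Definition continuous_Q1 (n : nat) (f : pt -> R -> R) : Prop :=
  forall x t, in_Q1 n x t ->
  forall eps, 0 < eps -> exists delta, 0 < delta /\
    forall y s, in_Q1 n y s ->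
      sqnorm n (fun k => y k - x k) + (s - t) ^ 2 < delta ^ 2 ->
      Rabs (f y s - f x t) < eps.

(* D is a family of all iterated partial derivatives of u on Q_1
   (D (d :: l) = partial_d (D l)), all continuous: u is smooth (C^infty)
   in Q_1, and D l is its derivative along the list of directions l. *)
Definition smooth_family (n : nat) (u : pt -> R -> R)
    (D : list dir -> pt -> R -> R) : Prop :=
  (forall x t, in_Q1 n x t -> D nil x t = u x t) /\
  (forall l, continuous_Q1 n (D l)) /\
  (forall l d, valid_dir n d -> has_partial_Q1 n (D l) (D (d :: l)) d).

Definition kron (i j : nat) : R := if Nat.eqb i j then 1 else 0.

Definition acoef (n : nat) (p eps : R) (q : pt) (i j : nat) : R :=
  kron i j + (p - 2) * (q i * q j) / (sqnorm n q + eps ^ 2).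

Definition gradD (D : list dir -> pt -> R -> R) (x : pt) (t : R) : pt :=
  fun i => D (Sp i :: nil) x t.

Definition aop (n : nat) (p eps : R) (q : pt) (M : nat -> nat -> R) : R :=
  sumR n (fun i => sumR n (fun j => acoef n p eps q i j * M i j)).

Definition phiD (n : nat) (p eps : R) (D : list dir -> pt -> R -> R) :
    pt -> R -> R :=
  fun x t => Rpower (sqnorm n (gradD D x t) + eps ^ 2) (p / 2).

(* Main.v *)
Require Import Defs.
From Stdlib Require Import Reals List.
From Stdlib Require Import Lra Lia FunctionalExtensionality.
Open Scope R_scope.

Definition lim0 (P : R -> Prop) (F : R -> R) (l : R) :=
  limit1_in F (fun h => h <> 0 /\ P h) l 0.

Lemma hp_lim0 n f g d :
  has_partial_Q1 n f g d <-> forall x t, in_Q1 n x t ->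
    lim0 (fun h => in_Q1 n (mvx d x h) (mvt d t h))
         (fun h => (f (mvx d x h) (mvt d t h) - f x t) / h) (g x t).
Proof.
  unfold has_partial_Q1, lim0, limit1_in, limit_in; simpl; unfold R_dist.
  split; intros H x t Hq eps He; destruct (H x t Hq eps He) as [del [Hd H']];
  exists del; split; auto.
  - intros h [[h0 hq] hd]. apply H'; auto. now rewrite Rminus_0_r in hd.
  - intros h h0 hd hq. apply H'. rewrite Rminus_0_r; auto.
Qed.

Lemma lim0_ext P F G l : (forall h, h <> 0 -> P h -> F h = G h) -> lim0 P F l -> lim0 P G l.
Proof.
  unfold lim0, limit1_in, limit_in; simpl; intros E H eps He.
  destruct (H eps He) as [a [Ha H']]; exists a; split; auto.
  intros h [[h0 hp] hd]. rewrite <- E; auto.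
Qed.

Lemma lim0_lext P F l l' : l = l' -> lim0 P F l -> lim0 P F l'.
Proof. intros ->; auto. Qed.

Lemma lim0_id P : lim0 P (fun h => h) 0.
Proof.
  unfold lim0, limit1_in, limit_in; simpl; intros eps He; exists eps; split; auto.
  intros h [_ hd]; auto.
Qed.

Lemma lim0_const P c : lim0 P (fun h => c) c.
Proof.
  unfold lim0, limit1_in, limit_in; simpl; intros eps He; exists 1; split; [lra|].
  intros; unfold R_dist; rewrite Rminus_diag, Rabs_R0; auto.
Qed.

Lemma lim0_add P F G a b : lim0 P F a -> lim0 P G b -> lim0 P (fun h => F h + G h) (a + b).
Proof. apply limit_plus. Qed.
Lemma lim0_mul P F G a b : lim0 P F a -> lim0 P G b -> lim0 P (fun h => F h * G h) (a * b).
Proof. apply limit_mul. Qed.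

Lemma lim0_comp P F a G : lim0 P F a ->
  (forall eps, 0 < eps -> exists del, 0 < del /\ forall y, Rabs (y - a) < del -> Rabs (G y - G a) < eps) ->
  lim0 P (fun h => G (F h)) (G a).
Proof.
  intros HF HG.
  assert (H := limit_comp F G _ (fun _ => True) a (G a) 0 HF).
  unfold lim0. 
  assert (H2: limit1_in G (fun _ => True) (G a) a).
  { unfold limit1_in, limit_in; simpl; unfold R_dist; intros eps He.
    destruct (HG eps He) as [d [Hd H']]; exists d; split; auto.
    intros y [_ hy]; auto. }
  specialize (H H2).
  unfold limit1_in, limit_in in *; simpl in *; intros eps He.
  destruct (H eps He) as [d [Hd H']]; exists d; split; auto.
  intros h [hp hd]; apply H'; split; auto; split; auto.
Qed.

Lemma lim0_cont P F a l : lim0 P (fun h => (F h - a) / h) l -> lim0 P F a.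
Proof.
  intro H.
  assert (H2 := lim0_mul _ _ _ _ _ H (lim0_id P)).
  assert (H3 := lim0_add _ _ _ _ _ H2 (lim0_const P a)).
  rewrite Rmult_0_r, Rplus_0_l in H3.
  eapply lim0_ext; [|exact H3]. intros h h0 _; simpl. field; auto.
Qed.

Lemma hp_ext n f f' g g' d :
  (forall x t, in_Q1 n x t -> f x t = f' x t) ->
  (forall x t, in_Q1 n x t -> g x t = g' x t) ->
  has_partial_Q1 n f g d -> has_partial_Q1 n f' g' d.
Proof.
  unfold has_partial_Q1; intros Ef Eg H x t Hq eps He.
  destruct (H x t Hq eps He) as [del [Hd H']]; exists del; split; auto.
  intros h h0 hd hq. rewrite <- !Ef, <- Eg; auto.
Qed.

Lemma hp_const n c d : has_partial_Q1 n (fun _ _ => c) (fun _ _ => 0) d.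
Proof.
  apply hp_lim0; intros x t Hq.
  eapply lim0_ext; [|apply lim0_const]. intros h h0 _; simpl; field; auto.
Qed.

Lemma hp_add n f g f' g' d : has_partial_Q1 n f f' d -> has_partial_Q1 n g g' d ->
  has_partial_Q1 n (fun x t => f x t + g x t) (fun x t => f' x t + g' x t) d.
Proof.
  rewrite !hp_lim0; intros Hf Hg x t Hq.
  eapply lim0_ext; [|apply lim0_add; [apply Hf|apply Hg]; auto].
  intros h h0 _; simpl; field; auto.
Qed.

Lemma hp_mul n f g f' g' d : has_partial_Q1 n f f' d -> has_partial_Q1 n g g' d ->
  has_partial_Q1 n (fun x t => f x t * g x t) (fun x t => f' x t * g x t + f x t * g' x t) d.
Proof.
  rewrite !hp_lim0; intros Hf Hg x t Hq.
  assert (Cg := lim0_cont _ _ _ _ (Hg x t Hq)).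
  eapply lim0_ext; [|apply lim0_add; [apply lim0_mul; [apply Hf; auto| exact Cg]|
     apply lim0_mul; [apply lim0_const|apply Hg; auto]]].
  intros h h0 _; simpl; field; auto.
Qed.

Lemma hp_comp n f g d (phi phi' : R -> R) :
  (forall x t, in_Q1 n x t -> derivable_pt_lim phi (f x t) (phi' (f x t))) ->
  has_partial_Q1 n f g d ->
  has_partial_Q1 n (fun x t => phi (f x t)) (fun x t => phi' (f x t) * g x t) d.
Proof.
  intros Hphi; rewrite !hp_lim0; intros Hf x t Hq.
  set (y0 := f x t).
  set (Rq := fun y => if Req_EM_T y y0 then phi' y0 else (phi y - phi y0) / (y - y0)).
  assert (Cf := lim0_cont _ _ _ _ (Hf x t Hq)).
  assert (HR : lim0 (fun h => in_Q1 n (mvx d x h) (mvt d t h))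
              (fun h => Rq (f (mvx d x h) (mvt d t h))) (Rq y0)).
  { apply lim0_comp; [exact Cf|].
    intros eps He. destruct (Hphi x t Hq eps He) as [[del Hd] H'].
    exists del; split; auto. intros y hy. unfold Rq.
    destruct (Req_EM_T y0 y0) as [_|c]; [|congruence].
    destruct (Req_EM_T y y0) as [->|ne].
    - rewrite Rminus_diag, Rabs_R0; auto.
    - specialize (H' (y - y0)). fold y0 in H'. replace (y0 + (y - y0)) with y in H' by ring.
      apply H'; auto. intro; apply ne; lra. }
  assert (HH := lim0_mul _ _ _ _ _ HR (Hf x t Hq)).
  unfold Rq at 2 in HH. destruct (Req_EM_T y0 y0) as [_|c]; [|congruence].
  eapply lim0_ext; [|exact HH].
  intros h h0 _; simpl. unfold Rq. fold y0.
  destruct (Req_EM_T (f (mvx d x h) (mvt d t h)) y0) as [e|ne].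
  - rewrite e. unfold Rdiv. rewrite !Rminus_diag. ring.
  - field. split; auto. intro; apply ne; lra.
Qed.

Lemma hp_sum n m (F G : nat -> pt -> R -> R) d :
  (forall k, (k < m)%nat -> has_partial_Q1 n (F k) (G k) d) ->
  has_partial_Q1 n (fun x t => sumR m (fun k => F k x t)) (fun x t => sumR m (fun k => G k x t)) d.
Proof.
  induction m; intros H; simpl.
  - apply hp_const.
  - apply hp_add; auto.
Qed.

Lemma Rpower_pos x y : 0 < Rpower x y.
Proof. unfold Rpower; apply exp_pos. Qed.

Lemma hp_rpow n f g d c :
  (forall x t, in_Q1 n x t -> 0 < f x t) ->
  has_partial_Q1 n f g d ->
  has_partial_Q1 n (fun x t => Rpower (f x t) c) (fun x t => c * Rpower (f x t) (c - 1) * g x t) d.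
Proof.
  intros Hp H. apply (hp_comp n f g d (fun y => Rpower y c) (fun y => c * Rpower y (c - 1))); auto.
  intros; apply derivable_pt_lim_power; auto.
Qed.

Lemma sumR_ext m f g : (forall k, (k < m)%nat -> f k = g k) -> sumR m f = sumR m g.
Proof. induction m; simpl; intros; auto. rewrite IHm, H; auto. Qed.
Lemma sumR_add m f g : sumR m (fun k => f k + g k) = sumR m f + sumR m g.
Proof. induction m; simpl; [ring|rewrite IHm; ring]. Qed.
Lemma sumR_sub m f g : sumR m (fun k => f k - g k) = sumR m f - sumR m g.
Proof. induction m; simpl; [ring|rewrite IHm; ring]. Qed.
Lemma sumR_scal m c f : sumR m (fun k => c * f k) = c * sumR m f.
Proof. induction m; simpl; [ring|rewrite IHm; ring]. Qed.
Lemma sumR_scalr m c f : sumR m (fun k => f k * c) = sumR m f * c.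
Proof. induction m; simpl; [ring|rewrite IHm; ring]. Qed.
Lemma sumR_zero m : sumR m (fun _ => 0) = 0.
Proof. induction m; simpl; [ring|rewrite IHm; ring]. Qed.
Lemma sumR_swap m m' f : sumR m (fun i => sumR m' (fun j => f i j)) = sumR m' (fun j => sumR m (fun i => f i j)).
Proof.
  induction m; simpl. { rewrite sumR_zero; auto. }
  rewrite IHm, <- sumR_add; auto.
Qed.
Lemma sumR_single m i f : (i < m)%nat -> (forall k, (k < m)%nat -> k <> i -> f k = 0) -> sumR m f = f i.
Proof.
  induction m; intros Hi H; [lia|]. simpl.
  destruct (Nat.eq_dec i m) as [->|ne].
  - rewrite (sumR_ext m f (fun _ => 0)), sumR_zero; [ring|].
    intros; apply H; lia.
  - rewrite IHm; [|lia|intros; apply H; lia]. rewrite (H m); [ring|lia|auto].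
Qed.
Lemma sumR_nonneg m f : (forall k, (k < m)%nat -> 0 <= f k) -> 0 <= sumR m f.
Proof. induction m; simpl; intros; [lra|]. assert (0 <= f m) by auto. assert (0 <= sumR m f) by auto. lra. Qed.
Lemma sumR_le_term m f i : (forall k, (k < m)%nat -> 0 <= f k) -> (i < m)%nat -> f i <= sumR m f.
Proof.
  induction m; simpl; intros; [lia|].
  destruct (Nat.eq_dec i m) as [->|ne].
  - assert (0 <= sumR m f) by (apply sumR_nonneg; auto). lra.
  - assert (f i <= sumR m f) by (apply IHm; auto; lia). assert (0 <= f m) by auto. lra.
Qed.
Lemma kron_sum m i f : (i < m)%nat -> sumR m (fun j => kron i j * f j) = f i.
Proof.
  intros Hi. rewrite (sumR_single m i); [unfold kron; rewrite Nat.eqb_refl; ring|auto|].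
  intros k Hk ne; unfold kron. destruct (Nat.eqb_spec i k); [lia|ring].
Qed.
Lemma kron_sum' m i f : (i < m)%nat -> sumR m (fun j => kron j i * f j) = f i.
Proof.
  intros Hi. rewrite (sumR_single m i); [unfold kron; rewrite Nat.eqb_refl; ring|auto|].
  intros k Hk ne; unfold kron. destruct (Nat.eqb_spec k i); [lia|ring].
Qed.

Lemma Rabs_le_inv a b : Rabs a <= b -> - b <= a <= b.
Proof. intros H. split; [|eapply Rle_trans; [apply Rle_abs|auto]].
  assert (- a <= Rabs a) by (rewrite <- Rabs_Ropp; apply Rle_abs). lra. Qed.
Lemma Rabs_lt_inv a b : Rabs a < b -> - b < a < b.
Proof. intros H. split; [|eapply Rle_lt_trans; [apply Rle_abs|auto]].
  assert (- a <= Rabs a) by (rewrite <- Rabs_Ropp; apply Rle_abs). lra. Qed.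

Definition sp_idx d k : bool := match d with Sp i => Nat.eqb k i | Tm => false end.
Definition isTm d : bool := match d with Tm => true | _ => false end.

Lemma mvx_k d y a k : mvx d y a k = y k + (if sp_idx d k then a else 0).
Proof.
  destruct d; simpl; [|ring]. unfold upd. destruct (Nat.eqb_spec k i); [subst; ring|ring].
Qed.
Lemma mvx_e d y a : mvx d y a = fun k => y k + (if sp_idx d k then a else 0).
Proof. apply functional_extensionality; intro; apply mvx_k. Qed.
Lemma mvt_e d t a : mvt d t a = t + (if isTm d then a else 0).
Proof. destruct d; simpl; ring. Qed.

Lemma mvx_0 d y : mvx d y 0 = y.
Proof. rewrite mvx_e; apply functional_extensionality; intro k; destruct (sp_idx d k); ring. Qed.
Lemma mvt_0 d t : mvt d t 0 = t.
Proof. rewrite mvt_e; destruct (isTm d); ring. Qed.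
Lemma mvx_add d y a h : mvx d (mvx d y a) h = mvx d y (a + h).
Proof. rewrite !mvx_e; apply functional_extensionality; intro k; destruct (sp_idx d k); ring. Qed.
Lemma mvt_add d t a h : mvt d (mvt d t a) h = mvt d t (a + h).
Proof. rewrite !mvt_e; destruct (isTm d); ring. Qed.
Lemma mvx_comm d1 d2 y a b : mvx d1 (mvx d2 y b) a = mvx d2 (mvx d1 y a) b.
Proof. rewrite !mvx_e; apply functional_extensionality; intro k; destruct (sp_idx d1 k), (sp_idx d2 k); ring. Qed.
Lemma mvt_comm d1 d2 t a b : mvt d1 (mvt d2 t b) a = mvt d2 (mvt d1 t a) b.
Proof. rewrite !mvt_e; destruct (isTm d1), (isTm d2); ring. Qed.

Lemma sqnorm_nonneg n y : 0 <= sqnorm n y.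
Proof. apply sumR_nonneg; intros; apply pow2_ge_0. Qed.

Lemma sqnorm_mvx n d y a : valid_dir n d ->
  sqnorm n (mvx d y a) = sqnorm n y + (match d with Sp i => 2 * y i * a + a ^ 2 | Tm => 0 end).
Proof.
  intros V. unfold sqnorm.
  rewrite (sumR_ext n _ (fun k => y k ^ 2 + (if sp_idx d k then 2 * y k * a + a ^ 2 else 0))).
  2:{ intros k _. rewrite mvx_k. destruct (sp_idx d k); ring. }
  rewrite sumR_add. f_equal.
  destruct d as [i|]; simpl in *.
  - rewrite (sumR_single n i); [rewrite Nat.eqb_refl; ring|auto|].
    intros k _ ne; destruct (Nat.eqb_spec k i); [lia|auto].
  - apply sumR_zero.
Qed.

Lemma mvx_zero n d y a : valid_dir n d -> (forall k, (n <= k)%nat -> y k = 0) ->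
  forall k, (n <= k)%nat -> mvx d y a k = 0.
Proof.
  intros V H k Hk. rewrite mvx_k, H; auto. destruct d; simpl in *; [|ring].
  destruct (Nat.eqb_spec k i); [lia|ring].
Qed.

Lemma y_i_bound n y i : (i < n)%nat -> y i ^ 2 <= sqnorm n y.
Proof. intros. apply (sumR_le_term n (fun k => y k ^ 2)); auto. intros; apply pow2_ge_0. Qed.

Lemma step_bound n d y a : valid_dir n d -> Rabs a <= 1 ->
  Rabs (sqnorm n (mvx d y a) - sqnorm n y) <= (2 + sqnorm n y) * Rabs a.
Proof.
  intros V Ha. rewrite sqnorm_mvx; auto.
  assert (0 <= sqnorm n y) by apply sqnorm_nonneg.
  destruct d as [i|].
  - simpl in V. assert (Hy := y_i_bound n y i V).
    replace (sqnorm n y + (2 * y i * a + a ^ 2) - sqnorm n y) with (2 * y i * a + a ^ 2) by ring.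
    set (Sq := sqnorm n y) in *. set (Y := y i) in *.
    assert (2 * Y <= 1 + Y ^ 2) by (assert (0 <= (Y - 1)^2) by apply pow2_ge_0; nra). assert (- (2 * Y) <= 1 + Y ^ 2) by (assert (0 <= (Y + 1)^2) by apply pow2_ge_0; nra).
    apply Rabs_le.
    destruct (Rcase_abs a) as [Hn|Hp]; [rewrite Rabs_left in *|rewrite Rabs_right in *]; auto.
    + assert (a ^ 2 <= - a) by nra. assert (Y ^ 2 * - a <= Sq * - a) by nra. split; nra.
    + assert (a ^ 2 <= a) by nra. assert (Y ^ 2 * a <= Sq * a) by nra. split; nra.
  - replace (sqnorm n y + 0 - sqnorm n y) with 0 by ring. rewrite Rabs_R0.
    assert (0 <= Rabs a) by apply Rabs_pos. nra.
Qed.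

Definition Px d1 d2 (x : pt) a b := mvx d1 (mvx d2 x b) a.
Definition Pt d1 d2 (t : R) a b := mvt d1 (mvt d2 t b) a.

Lemma box n d1 d2 x t : valid_dir n d1 -> valid_dir n d2 -> in_Q1 n x t ->
  (t < 0 \/ (isTm d1 = false /\ isTm d2 = false)) ->
  exists r, 0 < r /\ forall a b, Rabs a < r -> Rabs b < r -> in_Q1 n (Px d1 d2 x a b) (Pt d1 d2 t a b).
Proof.
  intros V1 V2 [[Hz Hs] Ht] Hc.
  set (S0 := sqnorm n x).
  assert (HS0 : 0 <= S0) by apply sqnorm_nonneg.
  assert (Hgen : forall r, 0 < r -> r <= 1 -> r <= (1 - S0) / 10 ->
     forall a b, Rabs a < r -> Rabs b < r -> in_B1 n (Px d1 d2 x a b)).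
  { intros r Hr Hr1 Hr2 a b Ha Hb. unfold Px. split.
    - apply mvx_zero; auto. apply mvx_zero; auto.
    - assert (B1 := step_bound n d2 x b V2 ltac:(lra)).
      assert (B2 := step_bound n d1 (mvx d2 x b) a V1 ltac:(lra)).
      fold S0 in B1. set (S1 := sqnorm n (mvx d2 x b)) in *.
      apply Rabs_le_inv in B1. apply Rabs_le_inv in B2.
      assert (0 <= Rabs a) by apply Rabs_pos. assert (0 <= Rabs b) by apply Rabs_pos.
      assert (S1 <= S0 + 3 * Rabs b) by nra.
      assert ((2 + S1) * Rabs a <= 6 * Rabs a) by nra.
      lra. }
  destruct Hc as [Hneg|[T1 T2]].
  - exists (Rmin (Rmin 1 ((1 - S0) / 10)) (Rmin ((t + 1) / 3) (- t / 3))).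
    assert (0 < Rmin (Rmin 1 ((1 - S0) / 10)) (Rmin ((t + 1) / 3) (- t / 3))).
    { repeat apply Rmin_glb_lt; unfold S0 in *; lra. }
    split; auto. intros a b Ha Hb.
    assert (Rmin (Rmin 1 ((1 - S0) / 10)) (Rmin ((t + 1) / 3) (- t / 3)) <= 1) by
      (eapply Rle_trans; apply Rmin_l).
    assert (Rmin (Rmin 1 ((1 - S0) / 10)) (Rmin ((t + 1) / 3) (- t / 3)) <= (1 - S0) / 10) by
      (eapply Rle_trans; [apply Rmin_l|apply Rmin_r]).
    assert (Rmin (Rmin 1 ((1 - S0) / 10)) (Rmin ((t + 1) / 3) (- t / 3)) <= (t + 1) / 3) by
      (eapply Rle_trans; [apply Rmin_r|apply Rmin_l]).
    assert (Rmin (Rmin 1 ((1 - S0) / 10)) (Rmin ((t + 1) / 3) (- t / 3)) <= - t / 3) by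
      (eapply Rle_trans; [apply Rmin_r|apply Rmin_r]).
    split; [eapply Hgen; eauto|].
    unfold Pt; rewrite !mvt_e.
    apply Rabs_lt_inv in Ha; apply Rabs_lt_inv in Hb.
    destruct (isTm d1), (isTm d2); lra.
  - exists (Rmin 1 ((1 - S0) / 10)).
    assert (0 < Rmin 1 ((1 - S0) / 10)) by (apply Rmin_glb_lt; unfold S0 in *; lra).
    split; auto. intros a b Ha Hb. split.
    + eapply Hgen; eauto; [apply Rmin_l|apply Rmin_r].
    + unfold Pt; rewrite !mvt_e, T1, T2. lra.
Qed.

Lemma deriv_path n g g' d (Y : R -> pt) (T : R -> R) c r :
  has_partial_Q1 n g g' d -> 0 < r ->
  (forall h, Rabs h < r -> in_Q1 n (Y (c + h)) (T (c + h))) ->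
  (forall h, Y (c + h) = mvx d (Y c) h /\ T (c + h) = mvt d (T c) h) ->
  derivable_pt_lim (fun s => g (Y s) (T s)) c (g' (Y c) (T c)).
Proof.
  intros Hg Hr Hin He eps Heps.
  assert (Hc : in_Q1 n (Y c) (T c)).
  { specialize (Hin 0). rewrite Rplus_0_r in Hin. apply Hin. rewrite Rabs_R0; auto. }
  destruct (Hg _ _ Hc eps Heps) as [del [Hd H']].
  assert (0 < Rmin del r) by (apply Rmin_glb_lt; auto).
  exists (mkposreal _ H). simpl. intros h h0 hd.
  destruct (He h) as [E1 E2]. rewrite E1, E2. apply H'; auto.
  - eapply Rlt_le_trans; [exact hd|apply Rmin_l].
  - rewrite <- E1, <- E2. apply Hin. eapply Rlt_le_trans; [exact hd|apply Rmin_r].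
Qed.

Lemma dA n d1 d2 x t g g' r a b :
  has_partial_Q1 n g g' d1 -> 0 < r ->
  (forall a b, Rabs a < r -> Rabs b < r -> in_Q1 n (Px d1 d2 x a b) (Pt d1 d2 t a b)) ->
  Rabs a < r / 2 -> Rabs b < r / 2 ->
  derivable_pt_lim (fun s => g (Px d1 d2 x s b) (Pt d1 d2 t s b)) a
     (g' (Px d1 d2 x a b) (Pt d1 d2 t a b)).
Proof.
  intros Hg Hr Hbox Ha Hb.
  apply (deriv_path n g g' d1 (fun s => Px d1 d2 x s b) (fun s => Pt d1 d2 t s b) a (r / 2)); auto; [lra| |].
  - intros h Hh. apply Hbox; [|lra].
    eapply Rle_lt_trans; [apply Rabs_triang|lra].
  - intros h; unfold Px, Pt; rewrite mvx_add, mvt_add; auto.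
Qed.

Lemma dB n d1 d2 x t g g' r a b :
  has_partial_Q1 n g g' d2 -> 0 < r ->
  (forall a b, Rabs a < r -> Rabs b < r -> in_Q1 n (Px d1 d2 x a b) (Pt d1 d2 t a b)) ->
  Rabs a < r / 2 -> Rabs b < r / 2 ->
  derivable_pt_lim (fun s => g (Px d1 d2 x a s) (Pt d1 d2 t a s)) b
     (g' (Px d1 d2 x a b) (Pt d1 d2 t a b)).
Proof.
  intros Hg Hr Hbox Ha Hb.
  apply (deriv_path n g g' d2 (fun s => Px d1 d2 x a s) (fun s => Pt d1 d2 t a s) b (r / 2)); auto; [lra| |].
  - intros h Hh. apply Hbox; [lra|].
    eapply Rle_lt_trans; [apply Rabs_triang|lra].
  - intros h; unfold Px, Pt. rewrite !(mvx_comm d1 d2), !(mvt_comm d1 d2), mvx_add, mvt_add; auto.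
Qed.

(* uniqueness of derivative at points with a two-sided neighbourhood *)
Lemma hp_unique n f g1 g2 d x t :
  has_partial_Q1 n f g1 d -> has_partial_Q1 n f g2 d -> valid_dir n d -> in_Q1 n x t ->
  (t < 0 \/ isTm d = false) -> g1 x t = g2 x t.
Proof.
  intros H1 H2 V Hq Hc.
  destruct (box n d d x t V V Hq ltac:(destruct Hc; [left|right]; auto)) as [r [Hr Hbox]].
  assert (E : forall a, Px d d x a 0 = mvx d x a /\ Pt d d t a 0 = mvt d t a).
  { intros; unfold Px, Pt; rewrite mvx_0, mvt_0; auto. }
  assert (D1 := dA n d d x t f g1 r 0 0 H1 Hr Hbox ltac:(rewrite Rabs_R0; lra) ltac:(rewrite Rabs_R0; lra)).
  assert (D2 := dA n d d x t f g2 r 0 0 H2 Hr Hbox ltac:(rewrite Rabs_R0; lra) ltac:(rewrite Rabs_R0; lra)).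
  assert (U := uniqueness_limite _ _ _ _ D1 D2).
  unfold Px, Pt in U; rewrite !mvx_0, !mvt_0 in U. auto.
Qed.

Lemma sq_dist n d1 d2 x t a b : valid_dir n d1 -> valid_dir n d2 -> d1 <> d2 ->
  sqnorm n (fun k => Px d1 d2 x a b k - x k) + (Pt d1 d2 t a b - t) ^ 2 = a ^ 2 + b ^ 2.
Proof.
  intros V1 V2 ne. unfold sqnorm, Px, Pt.
  rewrite (sumR_ext n _ (fun k => (if sp_idx d1 k then a ^ 2 else 0) + (if sp_idx d2 k then b ^ 2 else 0))).
  2:{ intros k Hk. rewrite !mvx_k.
      destruct d1 as [i|], d2 as [j|]; simpl; try (destruct (Nat.eqb_spec k i)); try (destruct (Nat.eqb_spec k j)); try ring.
      subst; congruence. }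
  rewrite sumR_add, !mvt_e.
  assert (Hs : forall d c, valid_dir n d -> sumR n (fun k => if sp_idx d k then c else 0) = if isTm d then 0 else c).
  { intros d c V. destruct d as [i|]; simpl.
    - rewrite (sumR_single n i); [rewrite Nat.eqb_refl; auto|auto|].
      intros k _ nk; destruct (Nat.eqb_spec k i); [lia|auto].
    - apply sumR_zero. }
  rewrite !Hs; auto.
  destruct d1, d2; simpl; try ring. congruence.
Qed.

Lemma schwarz_int n u D l d1 d2 x t : smooth_family n u D -> valid_dir n d1 -> valid_dir n d2 ->
  d1 <> d2 -> in_Q1 n x t -> (t < 0 \/ (isTm d1 = false /\ isTm d2 = false)) ->
  D (d1 :: d2 :: l) x t = D (d2 :: d1 :: l) x t.
Proof.
  intros [_ [Hcont Hpar]] V1 V2 ne Hq Hc.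
  destruct (box n d1 d2 x t V1 V2 Hq Hc) as [r [Hr Hbox]].
  set (f := D l). set (f1 := D (d1 :: l)). set (f2 := D (d2 :: l)).
  set (f12 := D (d1 :: d2 :: l)). set (f21 := D (d2 :: d1 :: l)).
  assert (P1 : has_partial_Q1 n f f1 d1) by (apply Hpar; auto).
  assert (P2 : has_partial_Q1 n f f2 d2) by (apply Hpar; auto).
  assert (P21 : has_partial_Q1 n f1 f21 d2) by (apply Hpar; auto).
  assert (P12 : has_partial_Q1 n f2 f12 d1) by (apply Hpar; auto).
  set (P := fun (g : pt -> R -> R) a b => g (Px d1 d2 x a b) (Pt d1 d2 t a b)).
  assert (Key : forall h, 0 < h < r / 2 -> exists a1 b1 a2 b2,
     0 <= a1 <= h /\ 0 <= b1 <= h /\ 0 <= a2 <= h /\ 0 <= b2 <= h /\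
     P f21 a1 b1 = P f12 a2 b2).
  { intros h Hh.
    assert (Rin : forall c, 0 <= c <= h -> Rabs c < r / 2).
    { intros c Hc'; rewrite Rabs_right; lra. }
    destruct (MVT_cor2 (fun s => P f s h - P f s 0) (fun s => P f1 s h - P f1 s 0) 0 h) as [c [Ec Hc1]];
      [lra| |].
    { intros c Hc'. apply (derivable_pt_lim_minus (fun s => P f s h) (fun s => P f s 0)).
      - apply (dA n d1 d2 x t f f1 r c h); auto; apply Rin; lra.
      - apply (dA n d1 d2 x t f f1 r c 0); auto. apply Rin; lra. }
    destruct (MVT_cor2 (fun s => P f1 c s) (fun s => P f21 c s) 0 h) as [c' [Ec' Hc2]]; [lra| |].
    { intros s Hs. apply (dB n d1 d2 x t f1 f21 r c s); auto; apply Rin; lra. }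
    destruct (MVT_cor2 (fun s => P f h s - P f 0 s) (fun s => P f2 h s - P f2 0 s) 0 h) as [e [Ee He1]];
      [lra| |].
    { intros s Hs. apply (derivable_pt_lim_minus (fun s => P f h s) (fun s => P f 0 s)).
      - apply (dB n d1 d2 x t f f2 r h s); auto; apply Rin; lra.
      - apply (dB n d1 d2 x t f f2 r 0 s); auto. apply Rin; lra. }
    destruct (MVT_cor2 (fun s => P f2 s e) (fun s => P f12 s e) 0 h) as [e' [Ee' He2]]; [lra| |].
    { intros s Hs. apply (dA n d1 d2 x t f2 f12 r s e); auto; apply Rin; lra. }
    exists c, c', e', e. repeat split; try lra.
    simpl in Ec, Ec', Ee, Ee'. rewrite Ec' in Ec. rewrite Ee' in Ee.
    assert (h * h * (P f21 c c' - P f12 e' e) = 0) by lra.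
    apply Rmult_integral in H as [H|H]; [|lra]. apply Rmult_integral in H as [H|H]; lra. }
  apply Rminus_diag_uniq.
  assert (Hle : forall eps, 0 < eps -> Rabs (f12 x t - f21 x t) < 2 * eps).
  { intros eps He.
    destruct (Hcont (d1 :: d2 :: l) x t Hq eps He) as [de1 [Hd1 C1]].
    destruct (Hcont (d2 :: d1 :: l) x t Hq eps He) as [de2 [Hd2 C2]].
    set (h := Rmin (r / 4) (Rmin de1 de2 / 2)).
    assert (0 < Rmin de1 de2) by (apply Rmin_glb_lt; lra).
    assert (Hh0 : 0 < h) by (unfold h; apply Rmin_glb_lt; lra).
    assert (Hh1 : h <= r / 4) by apply Rmin_l.
    assert (Hh2 : h <= de1 / 2) by (eapply Rle_trans; [apply Rmin_r|]; apply Rmult_le_compat_r; [lra|apply Rmin_l]).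
    assert (Hh3 : h <= de2 / 2) by (eapply Rle_trans; [apply Rmin_r|]; apply Rmult_le_compat_r; [lra|apply Rmin_r]).
    destruct (Key h ltac:(lra)) as [a1 [b1 [a2 [b2 [Ha1 [Hb1 [Ha2 [Hb2 E]]]]]]]].
    assert (Q1 : in_Q1 n (Px d1 d2 x a1 b1) (Pt d1 d2 t a1 b1)) by (apply Hbox; rewrite Rabs_right; lra).
    assert (Q2 : in_Q1 n (Px d1 d2 x a2 b2) (Pt d1 d2 t a2 b2)) by (apply Hbox; rewrite Rabs_right; lra).
    specialize (C2 _ _ Q1). specialize (C1 _ _ Q2).
    rewrite sq_dist in C1, C2; auto.
    assert (A1 : Rabs (f21 (Px d1 d2 x a1 b1) (Pt d1 d2 t a1 b1) - f21 x t) < eps) by (apply C2; nra).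
    assert (A2 : Rabs (f12 (Px d1 d2 x a2 b2) (Pt d1 d2 t a2 b2) - f12 x t) < eps) by (apply C1; nra).
    unfold P in E. rewrite E in A1.
    replace (f12 x t - f21 x t) with ((f12 (Px d1 d2 x a2 b2) (Pt d1 d2 t a2 b2) - f21 x t)
          - (f12 (Px d1 d2 x a2 b2) (Pt d1 d2 t a2 b2) - f12 x t)) by ring.
    eapply Rle_lt_trans; [apply Rabs_triang|]. rewrite Rabs_Ropp. lra. }
  destruct (Req_dec (f12 x t - f21 x t) 0) as [H|H]; auto. exfalso.
  assert (0 < Rabs (f12 x t - f21 x t)) by (apply Rabs_pos_lt; auto).
  specialize (Hle (Rabs (f12 x t - f21 x t) / 4) ltac:(lra)). lra.
Qed.

Lemma eq_from_below n f g x t : continuous_Q1 n f -> continuous_Q1 n g -> in_Q1 n x t ->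
  (forall s, -1 < s < t -> f x s = g x s) -> f x t = g x t.
Proof.
  intros Cf Cg Hq H. apply Rminus_diag_uniq.
  destruct (Req_dec (f x t - g x t) 0) as [E|E]; auto. exfalso.
  assert (0 < Rabs (f x t - g x t)) by (apply Rabs_pos_lt; auto).
  set (eps := Rabs (f x t - g x t) / 4).
  destruct (Cf x t Hq eps ltac:(unfold eps; lra)) as [d1 [Hd1 C1]].
  destruct (Cg x t Hq eps ltac:(unfold eps; lra)) as [d2 [Hd2 C2]].
  destruct Hq as [HB Ht].
  set (s := t - Rmin (Rmin d1 d2) (t + 1) / 2).
  assert (0 < Rmin (Rmin d1 d2) (t + 1)) by (repeat apply Rmin_glb_lt; lra).
  assert (Rmin (Rmin d1 d2) (t + 1) <= d1) by (eapply Rle_trans; apply Rmin_l).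
  assert (Rmin (Rmin d1 d2) (t + 1) <= d2) by (eapply Rle_trans; [apply Rmin_l|apply Rmin_r]).
  assert (Rmin (Rmin d1 d2) (t + 1) <= t + 1) by apply Rmin_r.
  assert (Qs : in_Q1 n x s) by (split; auto; unfold s; lra).
  assert (Z : sqnorm n (fun k => x k - x k) = 0).
  { unfold sqnorm. rewrite (sumR_ext n _ (fun _ => 0)); [apply sumR_zero|intros; ring]. }
  specialize (C1 x s Qs). specialize (C2 x s Qs). rewrite Z in C1, C2.
  assert (Es : (s - t) ^ 2 = (Rmin (Rmin d1 d2) (t + 1) / 2) ^ 2) by (unfold s; ring).
  rewrite Es in C1, C2. set (m := Rmin (Rmin d1 d2) (t + 1)) in *.
  assert ((m/2)^2 < d1 ^ 2) by nra. assert ((m/2)^2 < d2 ^ 2) by nra.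
  assert (A1 : Rabs (f x s - f x t) < eps) by (apply C1; lra).
  assert (A2 : Rabs (g x s - g x t) < eps) by (apply C2; lra).
  rewrite H in A1 by (unfold s; lra).
  assert (Rabs (f x t - g x t) <= Rabs (g x s - g x t) + Rabs (g x s - f x t)).
  { replace (f x t - g x t) with ((g x s - g x t) + - (g x s - f x t)) by ring.
    eapply Rle_trans; [apply Rabs_triang|]. rewrite Rabs_Ropp; lra. }
  unfold eps in *. lra.
Qed.

Lemma schwarz n u D l d1 d2 x t : smooth_family n u D -> valid_dir n d1 -> valid_dir n d2 ->
  in_Q1 n x t -> D (d1 :: d2 :: l) x t = D (d2 :: d1 :: l) x t.
Proof.
  intros Hs V1 V2 Hq.
  assert (Hd : {d1 = d2} + {d1 <> d2}) by (decide equality; apply Nat.eq_dec).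
  destruct Hd as [->|ne]; auto.
  destruct (isTm d1) eqn:T1; [|destruct (isTm d2) eqn:T2].
  3: { apply (schwarz_int n u D); auto. }
  all: assert (Hs2 := Hs); destruct Hs2 as [H0 [Hc Hp]];
    apply (eq_from_below n); auto; intros s Hs'; apply (schwarz_int n u D); auto;
      [split; [apply Hq|destruct Hq as [_ ?]; lra] | left; destruct Hq as [_ ?]; lra].
Qed.

Lemma hp_scal n f f' d c : has_partial_Q1 n f f' d ->
  has_partial_Q1 n (fun x t => c * f x t) (fun x t => c * f' x t) d.
Proof.
  intro H. eapply hp_ext; [| |apply (hp_mul n _ _ _ _ d (hp_const n c d) H)]; intros; simpl; ring.
Qed.

Definition Sf n eps (D : list dir -> pt -> R -> R) x t := sqnorm n (gradD D x t) + eps ^ 2.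
Definition SD n (D : list dir -> pt -> R -> R) d x t :=
  2 * sumR n (fun k => D (Sp k :: nil) x t * D (d :: Sp k :: nil) x t).

Lemma Sf_pos n eps D x t : 0 < eps -> 0 < Sf n eps D x t.
Proof. intros. unfold Sf. assert (0 <= sqnorm n (gradD D x t)) by apply sqnorm_nonneg. nra. Qed.

Lemma hp_Sf n u eps D d : smooth_family n u D -> valid_dir n d ->
  has_partial_Q1 n (Sf n eps D) (SD n D d) d.
Proof.
  intros [_ [_ Hp]] V.
  assert (H1 : has_partial_Q1 n (fun x t => sumR n (fun k => D (Sp k :: nil) x t * D (Sp k :: nil) x t) + eps ^ 2)
     (fun x t => sumR n (fun k => D (d :: Sp k :: nil) x t * D (Sp k :: nil) x t + D (Sp k :: nil) x t * D (d :: Sp k :: nil) x t) + 0) d).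
  { apply hp_add; [|apply hp_const]. apply (hp_sum n n (fun k x t => D (Sp k :: nil) x t * D (Sp k :: nil) x t)).
    intros k _. apply hp_mul; apply Hp; auto. }
  eapply hp_ext; [| |exact H1]; intros x t _; unfold Sf, SD, sqnorm, gradD.
  - f_equal. apply sumR_ext; intros; ring.
  - rewrite <- sumR_scal. rewrite Rplus_0_r. apply sumR_ext; intros; ring.
Qed.

Definition phit_f n p eps D x t := p / 2 * Rpower (Sf n eps D x t) (p / 2 - 1) * SD n D Tm x t.
Definition phi1_f n p eps D j x t := p / 2 * Rpower (Sf n eps D x t) (p / 2 - 1) * SD n D (Sp j) x t.
Definition phi2_f n p eps D i j x t :=
  p / 2 * ((p / 2 - 1) * Rpower (Sf n eps D x t) (p / 2 - 1 - 1) * SD n D (Sp i) x t) * SD n D (Sp j) x t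
  + p / 2 * Rpower (Sf n eps D x t) (p / 2 - 1) *
    (2 * sumR n (fun k => D (Sp i :: Sp k :: nil) x t * D (Sp j :: Sp k :: nil) x t
                          + D (Sp k :: nil) x t * D (Sp i :: Sp j :: Sp k :: nil) x t)).

Lemma hp_phi n u p eps D d : smooth_family n u D -> valid_dir n d -> 0 < eps ->
  has_partial_Q1 n (phiD n p eps D)
    (fun x t => p / 2 * Rpower (Sf n eps D x t) (p / 2 - 1) * SD n D d x t) d.
Proof.
  intros Hs V He. apply (hp_rpow n (Sf n eps D) (SD n D d) d (p / 2)).
  - intros; apply Sf_pos; auto.
  - apply (hp_Sf n u); auto.
Qed.

Lemma hp_SD2 n u D i j : smooth_family n u D -> (i < n)%nat -> (j < n)%nat ->
  has_partial_Q1 n (SD n D (Sp j))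
   (fun x t => 2 * sumR n (fun k => D (Sp i :: Sp k :: nil) x t * D (Sp j :: Sp k :: nil) x t
                          + D (Sp k :: nil) x t * D (Sp i :: Sp j :: Sp k :: nil) x t)) (Sp i).
Proof.
  intros [_ [_ Hp]] Hi Hj. unfold SD. apply hp_scal.
  apply (hp_sum n n (fun k x t => D (Sp k :: nil) x t * D (Sp j :: Sp k :: nil) x t)).
  intros k _. apply hp_mul; apply Hp; simpl; auto.
Qed.

Lemma hp_phi1 n u p eps D i j : smooth_family n u D -> (i < n)%nat -> (j < n)%nat -> 0 < eps ->
  has_partial_Q1 n (phi1_f n p eps D j) (phi2_f n p eps D i j) (Sp i).
Proof.
  intros Hs Hi Hj He.
  assert (H1 := hp_rpow n (Sf n eps D) (SD n D (Sp i)) (Sp i) (p / 2 - 1)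
     ltac:(intros; apply Sf_pos; auto) (hp_Sf n u eps D (Sp i) Hs Hi)).
  assert (H2 := hp_mul n _ _ _ _ _ (hp_scal n _ _ _ (p / 2) H1) (hp_SD2 n u D i j Hs Hi Hj)).
  eapply hp_ext; [| |exact H2]; intros x t _; unfold phi1_f, phi2_f; simpl; ring.
Qed.

Definition aF n p eps (D : list dir -> pt -> R -> R) x t :=
  aop n p eps (gradD D x t) (fun i j => D (Sp i :: Sp j :: nil) x t).
Definition dAc n p eps (D : list dir -> pt -> R -> R) k i j x t :=
  (p - 2) * ((D (Sp k :: Sp i :: nil) x t * D (Sp j :: nil) x t + D (Sp i :: nil) x t * D (Sp k :: Sp j :: nil) x t) / Sf n eps D x t
     - (D (Sp i :: nil) x t * D (Sp j :: nil) x t) * SD n D (Sp k) x t / (Sf n eps D x t) ^ 2).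
Definition FD n p eps (D : list dir -> pt -> R -> R) k x t :=
  sumR n (fun i => sumR n (fun j => dAc n p eps D k i j x t * D (Sp i :: Sp j :: nil) x t
     + acoef n p eps (gradD D x t) i j * D (Sp k :: Sp i :: Sp j :: nil) x t)).

Lemma Rpow_m1 y : 0 < y -> Rpower y (-1) = / y.
Proof. intros. replace (-1) with (- (1)) by ring. rewrite Rpower_Ropp, Rpower_1; auto. Qed.
Lemma Rpow_m2 y : 0 < y -> Rpower y (-1 - 1) = / y ^ 2.
Proof. intros. replace (-1 - 1) with (- INR 2) by (simpl; ring). rewrite Rpower_Ropp, Rpower_pow; auto. Qed.

Lemma hp_aF n u p eps D k : smooth_family n u D -> (k < n)%nat -> 0 < eps ->
  has_partial_Q1 n (aF n p eps D) (FD n p eps D k) (Sp k).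
Proof.
  intros Hs Hk He. assert (Hs' := Hs). destruct Hs' as [_ [_ Hp]].
  set (A := fun i j (x : pt) (t : R) => kron i j + (p - 2) * ((D (Sp i :: nil) x t * D (Sp j :: nil) x t) * Rpower (Sf n eps D x t) (-1))).
  assert (HA : forall i j, has_partial_Q1 n (A i j)
     (fun x t => 0 + (p - 2) * ((D (Sp k :: Sp i :: nil) x t * D (Sp j :: nil) x t + D (Sp i :: nil) x t * D (Sp k :: Sp j :: nil) x t) * Rpower (Sf n eps D x t) (-1)
       + (D (Sp i :: nil) x t * D (Sp j :: nil) x t) * (-1 * Rpower (Sf n eps D x t) (-1 - 1) * SD n D (Sp k) x t))) (Sp k)).
  { intros i j. apply hp_add; [apply hp_const|]. apply hp_scal. apply hp_mul.
    - apply hp_mul; apply Hp; simpl; auto.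
    - apply hp_rpow; [intros; apply Sf_pos; auto|apply (hp_Sf n u); auto]. }
  assert (H := hp_sum n n _ _ (Sp k) (fun i _ => hp_sum n n _ _ (Sp k) (fun j _ =>
     hp_mul n (A i j) (D (Sp i :: Sp j :: nil)) _ _ (Sp k) (HA i j) (Hp _ (Sp k) Hk)))).
  eapply hp_ext; [| |exact H]; intros x t _; unfold aF, FD, aop; apply sumR_ext; intros i _; apply sumR_ext; intros j _.
  - unfold A, acoef. rewrite Rpow_m1 by (apply Sf_pos; auto). unfold Sf, gradD. unfold Rdiv; ring.
  - unfold dAc, acoef, A. assert (Sp := Sf_pos n eps D x t He).
    rewrite Rpow_m1, Rpow_m2 by auto. unfold Sf, gradD in *. field. lra.
Qed.

Definition dsum n (f : nat -> nat -> R) := sumR n (fun i => sumR n (fun j => f i j)).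

Lemma dsum_ext n f g : (forall i j, (i < n)%nat -> (j < n)%nat -> f i j = g i j) -> dsum n f = dsum n g.
Proof. intros; unfold dsum; apply sumR_ext; intros; apply sumR_ext; auto. Qed.
Lemma dsum_add n f g : dsum n (fun i j => f i j + g i j) = dsum n f + dsum n g.
Proof. unfold dsum. rewrite <- sumR_add. apply sumR_ext; intros; apply sumR_add. Qed.
Lemma dsum_sub n f g : dsum n (fun i j => f i j - g i j) = dsum n f - dsum n g.
Proof. unfold dsum. rewrite <- sumR_sub. apply sumR_ext; intros; apply sumR_sub. Qed.
Lemma dsum_scal n c f : dsum n (fun i j => c * f i j) = c * dsum n f.
Proof. unfold dsum. rewrite <- sumR_scal. apply sumR_ext; intros; apply sumR_scal. Qed.
Lemma dsum_swap n f : dsum n f = dsum n (fun i j => f j i).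
Proof. unfold dsum. apply sumR_swap. Qed.
Lemma dsum_prod n u v : dsum n (fun i j => u i * v j) = sumR n u * sumR n v.
Proof. unfold dsum. rewrite <- sumR_scalr. apply sumR_ext; intros. apply sumR_scal. Qed.
Lemma dsum_nonneg n f : (forall i j, 0 <= f i j) -> 0 <= dsum n f.
Proof. intros; unfold dsum; apply sumR_nonneg; intros; apply sumR_nonneg; auto. Qed.

Lemma CS_dsum n a b : (dsum n (fun i j => a i j * b i j)) ^ 2 <=
  dsum n (fun i j => a i j ^ 2) * dsum n (fun i j => b i j ^ 2).
Proof.
  set (A := dsum n (fun i j => a i j ^ 2)). set (B := dsum n (fun i j => a i j * b i j)).
  set (C := dsum n (fun i j => b i j ^ 2)).
  assert (Hl : forall l, 0 <= l ^ 2 * A + 2 * l * B + C).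
  { intros l. assert (0 <= dsum n (fun i j => (l * a i j + b i j) ^ 2)) by
      (apply dsum_nonneg; intros; apply pow2_ge_0).
    replace (l ^ 2 * A + 2 * l * B + C) with (dsum n (fun i j => (l * a i j + b i j) ^ 2)); auto.
    unfold A, B, C. rewrite <- !dsum_scal, <- !dsum_add. apply dsum_ext; intros; ring. }
  assert (HA : 0 <= A) by (apply dsum_nonneg; intros; apply pow2_ge_0).
  destruct (Req_dec A 0) as [A0|A0].
  - rewrite A0 in *. destruct (Req_dec B 0) as [B0|B0]; [rewrite B0; nra|].
    specialize (Hl (- (C + 1) / (2 * B))).
    replace (2 * (- (C + 1) / (2 * B)) * B) with (- (C + 1)) in Hl by (field; auto). nra.
  - specialize (Hl (- B / A)).
    assert (0 < A) by lra.
    replace ((- B / A) ^ 2 * A + 2 * (- B / A) * B + C) with ((A * C - B ^ 2) / A) in Hl by (field; auto).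
    assert (0 <= A * C - B ^ 2).
    { apply (Rmult_le_reg_r (/ A)); [apply Rinv_0_lt_compat; auto|]. rewrite Rmult_0_l. exact Hl. }
    lra.
Qed.

Lemma Aexp n p eps q M : dsum n (fun i j => acoef n p eps q i j * M i j) =
  sumR n (fun i => M i i) + (p - 2) / (sqnorm n q + eps ^ 2) * dsum n (fun i j => q i * q j * M i j).
Proof.
  unfold acoef. rewrite <- dsum_scal.
  rewrite (dsum_ext n _ (fun i j => kron i j * M i j + (p - 2) / (sqnorm n q + eps ^ 2) * (q i * q j * M i j)))
    by (intros; unfold Rdiv; ring).
  rewrite dsum_add. f_equal. unfold dsum. apply sumR_ext; intros. apply kron_sum; auto.
Qed.

Lemma dsum_sumR_swap n (f : nat -> nat -> nat -> R) :
  dsum n (fun i j => sumR n (fun k => f i j k)) = sumR n (fun k => dsum n (fun i j => f i j k)).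
Proof.
  unfold dsum. rewrite (sumR_ext n _ (fun i => sumR n (fun k => sumR n (fun j => f i j k))))
    by (intros; apply sumR_swap). apply sumR_swap.
Qed.
Lemma dsum_sumR_swap' n (f : nat -> nat -> nat -> R) :
  dsum n (fun i j => sumR n (fun k => f i j k)) = sumR n (fun k => dsum n (fun i j => f i j k)).
Proof. apply dsum_sumR_swap. Qed.

Lemma alg n p eps (q : nat -> R) (H : nat -> nat -> R) (T3 : nat -> nat -> nat -> R) (Tt : nat -> R) R1 R2 :
  1 < p -> 0 < eps -> 0 < R1 -> R2 = R1 / (sqnorm n q + eps ^ 2) ->
  (forall i j, (i < n)%nat -> (j < n)%nat -> H i j = H j i) ->
  (forall i j k, (i < n)%nat -> (j < n)%nat -> (k < n)%nat -> T3 i j k = T3 k i j) ->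
  (forall k, (k < n)%nat -> Tt k = sumR n (fun i => sumR n (fun j =>
      (p - 2) * ((H k i * q j + q i * H k j) / (sqnorm n q + eps ^ 2)
         - (q i * q j) * (2 * sumR n (fun m => q m * H k m)) / (sqnorm n q + eps ^ 2) ^ 2) * H i j
      + acoef n p eps q i j * T3 k i j))) ->
  p / 2 * R1 * (2 * sumR n (fun k => q k * Tt k)) -
  aop n p eps q (fun i j => p / 2 * ((p / 2 - 1) * R2 * (2 * sumR n (fun m => q m * H i m))) * (2 * sumR n (fun m => q m * H j m))
     + p / 2 * R1 * (2 * sumR n (fun k => H i k * H j k + q k * T3 i j k))) <= 0.
Proof.
  intros Hp He HR1 HR2 Hsym HT HTt.
  set (W := sqnorm n q + eps ^ 2) in *.
  assert (HW : 0 < W) by (unfold W; assert (0 <= sqnorm n q) by apply sqnorm_nonneg; nra).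
  set (z := fun i => sumR n (fun m => q m * H i m)).
  set (Z2 := sumR n (fun i => z i * z i)).
  set (Y := sumR n (fun i => q i * z i)).
  set (N := dsum n (fun i k => H i k * H i k)).
  set (TT := sumR n (fun k => q k * dsum n (fun i j => acoef n p eps q i j * T3 k i j))).
  assert (zs : forall i, (i < n)%nat -> sumR n (fun m => q m * H m i) = z i).
  { intros i Hi. unfold z. apply sumR_ext; intros. rewrite Hsym; auto. }
  assert (a1 : dsum n (fun i j => acoef n p eps q i j * (z i * z j)) = Z2 + (p - 2) / W * Y ^ 2).
  { rewrite Aexp. fold W. f_equal. f_equal.
    rewrite (dsum_ext n _ (fun i j => (q i * z i) * (q j * z j))) by (intros; ring).
    rewrite dsum_prod. unfold Y. ring. }
  assert (a2 : dsum n (fun i j => acoef n p eps q i j * sumR n (fun k => H i k * H j k)) = N + (p - 2) / W * Z2).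
  { rewrite Aexp. fold W. f_equal. f_equal.
    rewrite (dsum_ext n _ (fun i j => sumR n (fun k => (q i * H i k) * (q j * H j k))))
      by (intros; rewrite <- sumR_scal; apply sumR_ext; intros; ring).
    rewrite dsum_sumR_swap. unfold Z2. apply sumR_ext; intros k Hk.
    rewrite dsum_prod. rewrite zs; auto. }
  assert (a3 : dsum n (fun i j => acoef n p eps q i j * sumR n (fun k => q k * T3 i j k)) = TT).
  { rewrite (dsum_ext n _ (fun i j => sumR n (fun k => q k * (acoef n p eps q i j * T3 k i j)))).
    2:{ intros i j Hi Hj. rewrite <- sumR_scal. apply sumR_ext; intros k Hk. rewrite HT; auto; ring. }
    rewrite dsum_sumR_swap. unfold TT. apply sumR_ext; intros k Hk. apply dsum_scal. }
  assert (a5 : forall k, (k < n)%nat -> dsum n (fun i j =>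
      (p - 2) * ((H k i * q j + q i * H k j) / W
         - (q i * q j) * (2 * sumR n (fun m => q m * H k m)) / W ^ 2) * H i j) =
      (p - 2) / W * (2 * sumR n (fun i => H k i * z i)) - (p - 2) * 2 * z k / W ^ 2 * Y).
  { intros k Hk.
    rewrite (dsum_ext n _ (fun i j => (p - 2) / W * (H k i * (q j * H i j)) + (p - 2) / W * (H k j * (q i * H i j))
        - (p - 2) * 2 * z k / W ^ 2 * (q i * (q j * H i j)))) by (intros; unfold z; field; lra).
    rewrite dsum_sub, dsum_add, !dsum_scal.
    assert (E1 : dsum n (fun i j => H k i * (q j * H i j)) = sumR n (fun i => H k i * z i)).
    { unfold dsum. apply sumR_ext; intros. rewrite sumR_scal. auto. }
    assert (E2 : dsum n (fun i j => H k j * (q i * H i j)) = sumR n (fun i => H k i * z i)).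
    { rewrite dsum_swap. unfold dsum. apply sumR_ext; intros. rewrite sumR_scal. rewrite zs; auto. }
    assert (E3 : dsum n (fun i j => q i * (q j * H i j)) = Y).
    { unfold dsum, Y. apply sumR_ext; intros. rewrite sumR_scal. auto. }
    rewrite E1, E2, E3. ring. }
  assert (a4 : sumR n (fun k => q k * Tt k) = (p - 2) * (2 * Z2 / W - 2 * Y ^ 2 / W ^ 2) + TT).
  { rewrite (sumR_ext n _ (fun k => ((p - 2) / W * 2) * (q k * sumR n (fun i => H k i * z i))
        - ((p - 2) * 2 / W ^ 2 * Y) * (q k * z k) + q k * dsum n (fun i j => acoef n p eps q i j * T3 k i j))).
    2:{ intros k Hk. rewrite HTt; auto. fold W. fold (dsum n (fun i j =>
      (p - 2) * ((H k i * q j + q i * H k j) / W - q i * q j * (2 * sumR n (fun m => q m * H k m)) / W ^ 2) * H i j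
      + acoef n p eps q i j * T3 k i j)).
      rewrite dsum_add. rewrite a5; auto. field. lra. }
    rewrite sumR_add, sumR_sub, !sumR_scal. fold TT. fold Y.
    assert (E : sumR n (fun k => q k * sumR n (fun i => H k i * z i)) = Z2).
    { rewrite (sumR_ext n _ (fun k => sumR n (fun i => z i * (q k * H k i))))
        by (intros; rewrite <- sumR_scal; apply sumR_ext; intros; ring).
      rewrite sumR_swap. unfold Z2. apply sumR_ext; intros i Hi. rewrite sumR_scal, zs; auto; ring. }
    rewrite E. field. lra. }
  unfold aop. fold (dsum n (fun i j => acoef n p eps q i j *
     (p / 2 * ((p / 2 - 1) * R2 * (2 * sumR n (fun m => q m * H i m))) * (2 * sumR n (fun m => q m * H j m))
     + p / 2 * R1 * (2 * sumR n (fun k => H i k * H j k + q k * T3 i j k))))).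
  rewrite (dsum_ext n _ (fun i j => (p * (p - 2) * R2) * (acoef n p eps q i j * (z i * z j))
     + (p * R1) * (acoef n p eps q i j * sumR n (fun k => H i k * H j k))
     + (p * R1) * (acoef n p eps q i j * sumR n (fun k => q k * T3 i j k)))).
  2:{ intros i j Hi Hj. rewrite sumR_add. unfold z. field. }
  rewrite !dsum_add, !dsum_scal, a1, a2, a3, a4, HR2.
  assert (HN : 0 <= N) by (apply dsum_nonneg; intros; nra).
  assert (CS : Y ^ 2 <= N * W ^ 2).
  { assert (EY : Y = dsum n (fun i m => (q i * q m) * H i m)).
    { unfold Y, dsum. apply sumR_ext; intros. unfold z. rewrite <- sumR_scal. apply sumR_ext; intros; ring. }
    rewrite EY. eapply Rle_trans; [apply (CS_dsum n (fun i m => q i * q m) H)|]. cbv beta.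
    rewrite (dsum_ext n (fun i j => (q i * q j) ^ 2) (fun i j => q i ^ 2 * q j ^ 2)) by (intros; ring).
    rewrite dsum_prod. fold (sqnorm n q).
    assert (0 <= sqnorm n q) by apply sqnorm_nonneg.
    assert (sqnorm n q * sqnorm n q <= W ^ 2) by (unfold W; nra).
    assert (0 <= dsum n (fun i j => H i j ^ 2)) by (apply dsum_nonneg; intros; apply pow2_ge_0).
    rewrite (dsum_ext n (fun i j => H i j ^ 2) (fun i j => H i j * H i j)) by (intros; ring). fold N.
    nra. }
  assert (Goal : p / 2 * R1 * (2 * ((p - 2) * (2 * Z2 / W - 2 * Y ^ 2 / W ^ 2) + TT)) -
    (p * (p - 2) * (R1 / W) * (Z2 + (p - 2) / W * Y ^ 2) + p * R1 * (N + (p - 2) / W * Z2) + p * R1 * TT)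
    = - (p * R1) * (N + p * (p - 2) * (Y ^ 2 / W ^ 2))) by (field; lra).
  rewrite Goal.
  assert (0 <= Y ^ 2 / W ^ 2) by (apply Rmult_le_pos; [apply pow2_ge_0|apply Rlt_le, Rinv_0_lt_compat; nra]).
  assert (Y ^ 2 / W ^ 2 <= N).
  { apply (Rmult_le_reg_r (W ^ 2)); [nra|]. unfold Rdiv. rewrite Rmult_assoc, Rinv_l; nra. }
  assert (0 <= N + p * (p - 2) * (Y ^ 2 / W ^ 2)).
  { set (X := Y ^ 2 / W ^ 2) in *. destruct (Rle_dec 2 p).
    - assert (0 <= p * (p - 2)) by nra. assert (0 <= p * (p - 2) * X) by (apply Rmult_le_pos; lra). lra.
    - assert (-1 <= p * (p - 2)) by nra. assert (0 <= (p * (p - 2) + 1) * X) by (apply Rmult_le_pos; lra). nra. }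
  assert (0 < p * R1) by nra.
  assert (0 <= (p * R1) * (N + p * (p - 2) * (Y ^ 2 / W ^ 2))) by (apply Rmult_le_pos; lra). lra.
Qed.

Theorem lemma3p1 (n : nat) (p eps : R) (u : pt -> R -> R)
    (D : list dir -> pt -> R -> R) :
  1 < p -> 0 < eps ->
  smooth_family n u D ->
  (forall x t, in_Q1 n x t ->
     D (Tm :: nil) x t =
     aop n p eps (gradD D x t) (fun i j => D (Sp i :: Sp j :: nil) x t)) ->
  exists (phit : pt -> R -> R) (phi1 : nat -> pt -> R -> R)
         (phi2 : nat -> nat -> pt -> R -> R),
    has_partial_Q1 n (phiD n p eps D) phit Tm /\
    (forall j, (j < n)%nat -> has_partial_Q1 n (phiD n p eps D) (phi1 j) (Sp j)) /\
    (forall i j, (i < n)%nat -> (j < n)%nat ->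
       has_partial_Q1 n (phi1 j) (phi2 i j) (Sp i)) /\
    (forall x t, in_Q1 n x t ->
       phit x t - aop n p eps (gradD D x t) (fun i j => phi2 i j x t) <= 0).
Proof.
  intros Hp He Hs HPDE.
  exists (phit_f n p eps D), (phi1_f n p eps D), (phi2_f n p eps D).
  split; [exact (hp_phi n u p eps D Tm Hs I He)|].
  split; [intros j Hj; exact (hp_phi n u p eps D (Sp j) Hs Hj He)|].
  split; [intros i j Hi Hj; apply (hp_phi1 n u); auto|].
  intros x t Hq.
  assert (Hs' := Hs). destruct Hs' as [_ [_ Hpar]].
  assert (HW := Sf_pos n eps D x t He).
  assert (F1 : forall k, (k < n)%nat -> D (Tm :: Sp k :: nil) x t = FD n p eps D k x t).
  { intros k Hk. rewrite (schwarz n u D nil Tm (Sp k) x t Hs I Hk Hq).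
    apply (hp_unique n (D (Tm :: nil)) (D (Sp k :: Tm :: nil)) (FD n p eps D k) (Sp k) x t).
    - apply Hpar; simpl; auto.
    - eapply hp_ext; [| |apply (hp_aF n u p eps D k Hs Hk He)].
      + intros y s Hy. rewrite HPDE; auto.
      + intros; reflexivity.
    - exact Hk.
    - exact Hq.
    - right; auto. }
  assert (Hsym : forall i j, (i < n)%nat -> (j < n)%nat ->
     D (Sp i :: Sp j :: nil) x t = D (Sp j :: Sp i :: nil) x t).
  { intros. apply (schwarz n u D nil); auto. }
  assert (HT : forall i j k, (i < n)%nat -> (j < n)%nat -> (k < n)%nat ->
     D (Sp i :: Sp j :: Sp k :: nil) x t = D (Sp k :: Sp i :: Sp j :: nil) x t).
  { intros i j k Hi Hj Hk.
    rewrite <- (schwarz n u D (Sp j :: nil) (Sp i) (Sp k) x t Hs Hi Hk Hq).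
    apply (hp_unique n (D (Sp j :: Sp k :: nil)) (D (Sp i :: Sp j :: Sp k :: nil)) (D (Sp i :: Sp k :: Sp j :: nil)) (Sp i) x t).
    - apply Hpar; simpl; auto.
    - eapply hp_ext; [| |apply (Hpar (Sp k :: Sp j :: nil) (Sp i) Hi)].
      + intros y s Hy. apply (schwarz n u D nil); auto.
      + intros; reflexivity.
    - exact Hi.
    - exact Hq.
    - right; auto. }
  assert (HR2 : Rpower (Sf n eps D x t) (p / 2 - 1 - 1) = Rpower (Sf n eps D x t) (p / 2 - 1) / (sqnorm n (gradD D x t) + eps ^ 2)).
  { replace (p / 2 - 1 - 1) with ((p / 2 - 1) + -1) by ring. rewrite Rpower_plus, Rpow_m1; auto. }
  exact (alg n p eps (gradD D x t) (fun i j => D (Sp i :: Sp j :: nil) x t)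
    (fun i j k => D (Sp i :: Sp j :: Sp k :: nil) x t) (fun k => D (Tm :: Sp k :: nil) x t)
    (Rpower (Sf n eps D x t) (p / 2 - 1)) (Rpower (Sf n eps D x t) (p / 2 - 1 - 1))
    Hp He (Rpower_pos _ _) HR2 Hsym HT F1).
Qed.
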